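(* Consider problem (P): $\min_{{\bf x}\in\mathbb{R}^n} f({\bf x})+\lambda\|(A{\bf x}+{\bf b})_+\|_0$. For ${\bf x}^*\in\mathbb{R}^n$ let $\Gamma_*:=\{i: A_i{\bf x}^*+b_i=0\}$. (i) If ${\bf x}^*$ is a local minimizer of (P) and $A_{\Gamma_*}$ has full row rank, then $$-\nabla f({\bf x}^* )\in A^\top\,\partial\|(A{\bf x}^*+{\bf b})_+\|_0 .\qquad (\ast)$$ (ii) If ${\bf x}^*$ satisfies $(\ast)$ and $f$ is convex on some neighbourhood of ${\bf x}^*$, then ${\bf x}^*$ is a local minimizer of (P).
   Context: Standing setting: $f:\mathbb{R}^n\to\mathbb{R}$ is twice continuously differentiable, $\lambda>0$, $A\in\mathbb{R}^{m\times n}$ with rows $A_1,\dots,A_m$, ${\bf b}\in\mathbb{R}^m$. For ${\bf z}\in\mathbb{R}^m$, ${\bf z}_+$ is the componentwise positive part $\max\{z_i,0\}$ and $\|{\bf z}\|_0$ the number of nonzero entries. For $\Gamma\subseteq\{1,\dots,m\}$, $A_\Gamma$ is the submatrix of rows indexed by $\Gamma$. $\partial\|{\bf y}_+\|_0$ is the limiting subdifferential of ${\bf y}\mapsto\|{\bf y}_+\|_0$ at ${\bf y}$, which equals $\{{\bf v}\in\mathbb{R}^m: v_i\ge 0 \text{ if } y_i=0,\ v_i=0 \text{ if } y_i\neq0\}$. *)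

(* Defs.v *)
From HB Require Import structures.
From mathcomp Require Import all_boot all_order all_algebra.
From mathcomp Require Import all_classical all_reals all_analysis.
Set Implicit Arguments. Unset Strict Implicit. Unset Printing Implicit Defensive.
Import Order.TTheory GRing.Theory Num.Theory.
Import numFieldNormedType.Exports.
Local Open Scope classical_set_scope.
Local Open Scope ring_scope.

Definition partial {R : realType} {n : nat} (i : 'I_n) (g : 'cV[R]_n -> R)
  : 'cV[R]_n -> R := fun x => 'D_(delta_mx i 0) g x.

Definition grad {R : realType} {n : nat} (g : 'cV[R]_n -> R) (x : 'cV[R]_n)
  : 'cV[R]_n := \col_i partial i g x.

Definition C2 {R : realType} {n : nat} (f : 'cV[R]_n -> R) : Prop :=
  (forall x, differentiable f x) /\
  (forall (i : 'I_n) x, differentiable (partial i f) x) /\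
  (forall i j : 'I_n, continuous (partial j (partial i f))).

(* || z_+ ||_0 = number of strictly positive entries of z *)
Definition l0pos {R : realType} {m : nat} (z : 'cV[R]_m) : nat :=
  #|[set i : 'I_m | 0 < z i 0]|.

Definition objP {R : realType} {m n : nat} (f : 'cV[R]_n -> R) (lam : R)
  (A : 'M[R]_(m, n)) (b : 'cV[R]_m) (x : 'cV[R]_n) : R :=
  f x + lam * (l0pos (A *m x + b))%:R.

Definition local_minimizer {R : realType} {n : nat} (F : 'cV[R]_n -> R)
  (x : 'cV[R]_n) : Prop :=
  exists2 eps : R, 0 < eps & forall y, ball x eps y -> F x <= F y.

(* limiting subdifferential of y |-> ||y_+||_0 at y (explicit form given in
   the paper) *)
Definition subdiff_l0pos {R : realType} {m : nat} (y : 'cV[R]_m)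
  : set 'cV[R]_m :=
  [set v | forall i : 'I_m, (y i 0 = 0 -> 0 <= v i 0) /\ (y i 0 <> 0 -> v i 0 = 0)].

Definition active_set {R : realType} {m n : nat} (A : 'M[R]_(m, n))
  (b : 'cV[R]_m) (x : 'cV[R]_n) : {set 'I_m} :=
  [set i | (A *m x + b) i 0 == 0].

(* submatrix A_Gamma of rows indexed by Gamma (in increasing order) *)
Definition rows_of {R : realType} {m n : nat} (G : {set 'I_m})
  (A : 'M[R]_(m, n)) : 'M[R]_(#|G|, n) :=
  rowsub (fun k : 'I_#|G| => @enum_val _ (mem G) k) A.

Definition full_row_rank {R : realType} {p n : nat} (B : 'M[R]_(p, n)) : Prop :=
  \rank B = p.

Definition stationary {R : realType} {m n : nat} (f : 'cV[R]_n -> R)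
  (A : 'M[R]_(m, n)) (b : 'cV[R]_m) (x : 'cV[R]_n) : Prop :=
  exists2 v, subdiff_l0pos (A *m x + b) v & - grad f x = A^T *m v.

Definition convex_near {R : realType} {n : nat} (f : 'cV[R]_n -> R)
  (x : 'cV[R]_n) : Prop :=
  exists2 d : R, 0 < d & forall y z (t : R), ball x d y -> ball x d z ->
    0 <= t <= 1 -> f (t *: y + (1 - t) *: z) <= t * f y + (1 - t) * f z.

(* Main.v *)
Require Import Defs.
From HB Require Import structures.
From mathcomp Require Import all_boot all_order all_algebra.
From mathcomp Require Import all_classical all_reals all_analysis.
Import Order.TTheory GRing.Theory Num.Theory.
Import numFieldNormedType.Exports.
Local Open Scope classical_set_scope.
Local Open Scope ring_scope.
From mathcomp Require Import lra.

Lemma right_dnbhs (R : realType) : (0:R)^'+ `=>` (0:R)^'.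
Proof.
move=> P /=. rewrite /dnbhs /within /=. rewrite /at_right /within /=; apply: filterS => x Px x0.
by apply: Px; rewrite gt_eqF.
Qed.

Lemma D_ge (R : realType) n (g : 'cV[R]_n -> R) x v (c : R) :
  derivable g x v ->
  (\forall h \near 0^'+, c <= h^-1 *: (g (h *: v + x) - g x)) ->
  c <= 'D_v g x.
Proof.
move=> dg hc; apply: (@cvgr_to_ge _ (0:R)^'+ _ _ (fun h => h^-1 *: (g (h *: v + x) - g x))) => //.
by apply: cvg_trans (cvg_app _ (right_dnbhs _)) _; exact: dg.
Qed.

Lemma D_le (R : realType) n (g : 'cV[R]_n -> R) x v (c : R) :
  derivable g x v ->
  (\forall h \near 0^'+, h^-1 *: (g (h *: v + x) - g x) <= c) ->
  'D_v g x <= c.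
Proof.
move=> dg hc; apply: (@cvgr_to_le _ (0:R)^'+ _ _ (fun h => h^-1 *: (g (h *: v + x) - g x))) => //.
by apply: cvg_trans (cvg_app _ (right_dnbhs _)) _; exact: dg.
Qed.

Lemma D_grad (R : realType) n (g : 'cV[R]_n -> R) x v :
  differentiable g x ->
  'D_v g x = \sum_i grad g x i 0 * v i 0.
Proof.
move=> dg; rewrite deriveE //.
rewrite [in LHS](matrix_sum_delta v) linear_sum /=.
rewrite [LHS](eq_bigr (fun i => v i 0 * 'd g x (delta_mx i 0))); last first.
  move=> i _; rewrite big_ord1 linearZ /=. by [].
apply: eq_bigr => i _; rewrite mulrC mxE /partial deriveE //.
Qed.
Lemma cont_lin (R : realType) m n (A : 'M[R]_(m, n)) (b : 'cV[R]_m) i :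
  continuous (fun y : 'cV[R]_n => (A *m y + b) i 0).
Proof.
have -> : (fun y : 'cV[R]_n => (A *m y + b) i 0) =
  (fun y => (\sum_(j <- index_enum 'I_n) A i j * y j 0) + b i 0).
  by apply: funext => y; rewrite !mxE.
move=> y; apply: continuousD; last exact: cst_continuous.
elim: (index_enum 'I_n) => [|j s IH].
  have -> : (fun y0 : 'cV[R]_n => \sum_(j <- [::]) A i j * y0 j 0) = cst 0.
    by apply: funext => z; rewrite big_nil.
  exact: cst_continuous.
have -> : (fun y0 : 'cV[R]_n => \sum_(j0 <- j :: s) A i j0 * y0 j0 0) =
  (fun y0 => A i j * y0 j 0) + (fun y0 => \sum_(j0 <- s) A i j0 * y0 j0 0).
  by apply: funext => z; rewrite big_cons.
apply: continuousD => //.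
apply: continuousM; first exact: cst_continuous.
exact: coord_continuous.
Qed.

Lemma sign_near (R : realType) m n (A : 'M[R]_(m, n)) (b : 'cV[R]_m) (x : 'cV[R]_n) :
  \forall y \near x, forall i,
    ((A *m x + b) i 0 < 0 -> (A *m y + b) i 0 < 0) /\
    (0 < (A *m x + b) i 0 -> 0 < (A *m y + b) i 0).
Proof.
apply: (@filter_forall _ _ (fun i (y : 'cV[R]_n) => ((A *m x + b) i 0 < 0 -> (A *m y + b) i 0 < 0) /\
    (0 < (A *m x + b) i 0 -> 0 < (A *m y + b) i 0)) (nbhs x) _) => i.
have c := @cont_lin _ _ _ A b i x.
have [h|h] := ltP ((A *m x + b) i 0) 0.
  move: (c) => /cvgr_lt /(_ _ h); apply: filterS => y hy.
  by split => // h2; move: (lt_trans h2 h); rewrite ltxx.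
have [h'|h'] := ltP 0 ((A *m x + b) i 0).
  move: (c) => /cvgr_gt /(_ _ h'); apply: filterS => y hy.
  by split => // h2; move: (le_lt_trans h h2); rewrite ltxx.
by near=> y; split.
Unshelve. all: by end_near.
Qed.
Lemma dotE (R : realType) n (g d : 'cV[R]_n) :
  \sum_i g i 0 * d i 0 = (g^T *m d) 0 0.
Proof. by rewrite !mxE; apply: eq_bigr => i _; rewrite mxE. Qed.

Lemma LA (R : realType) k n (B : 'M[R]_(k, n)) (g : 'cV[R]_n) :
  \rank B = k ->
  (forall d : 'cV[R]_n, (forall r, (B *m d) r 0 <= 0) -> 0 <= \sum_i g i 0 * d i 0) ->
  exists w : 'cV[R]_k, (forall r, 0 <= w r 0) /\ - g = B^T *m w.
Proof.
move=> rk H.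
have H0 (d : 'cV[R]_n) : B *m d = 0 -> (g^T *m d) 0 0 = 0.
  move=> Bd; apply/eqP; rewrite eq_le; apply/andP; split.
    have h1 : forall r, (B *m - d) r 0 <= 0 by move=> r; rewrite mulmxN Bd oppr0 mxE.
    by move: (H _ h1); rewrite dotE mulmxN mxE oppr_ge0.
  by rewrite -dotE; apply: H => r; rewrite Bd mxE.
have : (g^T <= B)%MS.
  rewrite submxE; apply/eqP/matrixP => i j.
  rewrite [i]ord1.
  have hB : B *m col j (cokermx B) = 0.
    apply/matrixP => a c; rewrite [c]ord1 !mxE.
    rewrite -[RHS](_ : (B *m cokermx B) a j = 0); last by rewrite mulmx_coker mxE.
    by rewrite mxE; apply: eq_bigr => l _; rewrite mxE.
  rewrite [RHS]mxE -(H0 _ hB) !mxE.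
  by apply: eq_bigr => l _; rewrite !mxE.
case/submxP => u gu.
have : row_full B^T by rewrite /row_full mxrank_tr rk.
case/row_fullP => E EB.
have BD : B *m E^T = 1%:M by rewrite -[B]trmxK -trmx_mul EB trmx1.
exists (- u^T); split.
  move=> r; rewrite mxE oppr_ge0 mxE.
  have h1 : forall (q : ordinal k), (B *m - (E^T *m (delta_mx r 0 : 'cV[R]_k))) q 0 <= 0.
    by move=> q; rewrite mulmxN mulmxA BD mul1mx !mxE oppr_le0 ler0n.
  move: (H _ h1).
  rewrite dotE gu mulmxN -mulmxA (mulmxA B) BD mul1mx mxE oppr_ge0.
  rewrite mxE (bigD1 r) //= big1 ?addr0; last first.
    by move=> i /negbTE ir; rewrite mxE ir andFb mulr0.
  by rewrite mxE !eqxx mulr1.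
by rewrite mulmxN -trmx_mul -gu trmxK.
Qed.
Lemma rows_mul (R : realType) m n (A : 'M[R]_(m, n)) (G : {set 'I_m}) (d : 'cV[R]_n) r :
  (rows_of G A *m d) r 0 = (A *m d) (enum_val r) 0.
Proof. by rewrite !mxE; apply: eq_bigr => j _; rewrite mxE. Qed.

Lemma lift_w (R : realType) m n (A : 'M[R]_(m, n)) (G : {set 'I_m}) (w : 'cV[R]_#|G|) :
  (forall r, 0 <= w r 0) ->
  exists v : 'cV[R]_m, (forall i, 0 <= v i 0) /\ (forall i, i \notin G -> v i 0 = 0) /\
    (rows_of G A)^T *m w = A^T *m v.
Proof.
move=> w0.
pose P : 'M[R]_(m, #|G|) := \matrix_(i, r) (i == enum_val r)%:R.
have RP : rows_of G A = P^T *m A.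
  apply/matrixP => r j; rewrite !mxE (bigD1 (enum_val r)) //= big1 ?addr0.
    by rewrite !mxE eqxx mul1r.
  by move=> i /negbTE ir; rewrite !mxE ir mul0r.
exists (P *m w); split; [|split].
- move=> i; rewrite mxE; apply: sumr_ge0 => r _; rewrite mxE.
  by apply: mulr_ge0 => //; rewrite ler0n.
- move=> i iG; rewrite mxE big1 // => r _; rewrite mxE.
  case: eqP => [ir|]; last by rewrite mul0r.
  by move: iG; rewrite ir; have := enum_valP r => ->.
- by rewrite RP trmx_mul trmxK mulmxA.
Qed.

Lemma l0pos_le (R : realType) m (z1 z2 : 'cV[R]_m) :
  (forall i, 0 < z1 i 0 -> 0 < z2 i 0) -> (l0pos z1 <= l0pos z2)%N.
Proof. by move=> H; rewrite /l0pos; apply/subset_leq_card/fintype.subsetP => i; rewrite !inE; apply: H. Qed.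

Lemma l0pos_lt (R : realType) m (z1 z2 : 'cV[R]_m) i :
  (forall i, 0 < z1 i 0 -> 0 < z2 i 0) -> 0 < z2 i 0 -> ~~ (0 < z1 i 0) ->
  (l0pos z1 < l0pos z2)%N.
Proof.
move=> H h2 h1; rewrite /l0pos; apply: proper_card; rewrite properE; apply/andP; split.
  by apply/fintype.subsetP => j; rewrite !inE; apply: H.
apply/fintype.subsetPn; exists i; first by rewrite inE.
by apply/negP; rewrite inE /=; apply/negP.
Qed.

Lemma nbhs_right (R : realType) (P : set R) :
  (\forall h \near (0:R), P h) -> \forall h \near (0:R)^'+, P h.
Proof. by move=> H; rewrite /at_right /within /=; apply: filterS H => h Ph _. Qed.
Lemma grad_ineq (R : realType) n (f : 'cV[R]_n -> R) (xs y : 'cV[R]_n) dl :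
  differentiable f xs ->
  (forall y z (t : R), ball xs dl y -> ball xs dl z ->
    0 <= t <= 1 -> f (t *: y + (1 - t) *: z) <= t * f y + (1 - t) * f z) ->
  0 < dl -> ball xs dl y ->
  'D_(y - xs) f xs <= f y - f xs.
Proof.
move=> dfx conv dl0 Hb; apply: D_le; first exact: diff_derivable.
near=> h.
have h0 : 0 < h by near: h; exact: nbhs_right_gt.
have h1 : h <= 1 by near: h; apply: nbhs_right_le; exact: ltr01.
have := conv y xs h Hb (ballxx _ dl0).
rewrite h1 ltW //= => cv.
have -> : h *: (y - xs) + xs = h *: y + (1 - h) *: xs.
  by rewrite scalerBr scalerBl scale1r addrA addrAC.
rewrite ler_pdivrMl //; lra.
Unshelve. all: by end_near.
Qed.

Lemma part2 (R : realType) (m n : nat) (f : 'cV[R]_n -> R) (lam : R)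
  (A : 'M[R]_(m, n)) (b : 'cV[R]_m) :
  C2 f -> 0 < lam -> forall xs : 'cV[R]_n,
     stationary f A b xs -> convex_near f xs ->
     local_minimizer (objP f lam A b) xs.
Proof.
move=> Cf lam0 xs [v sv gv] [dl dl0 conv].
have dfx : differentiable f xs by case: Cf.
have cf : {for xs, continuous f} := differentiable_continuous dfx.
suff : \forall y \near xs, objP f lam A b xs <= objP f lam A b y.
  by case/nbhs_ballP => e e0 He; exists e => // y /He.
near=> y.
have Hs : forall i,
    ((A *m xs + b) i 0 < 0 -> (A *m y + b) i 0 < 0) /\
    (0 < (A *m xs + b) i 0 -> 0 < (A *m y + b) i 0).
  by near: y; exact: sign_near.
have Hb : ball xs dl y by near: y; exact: nbhsx_ballx.
have Hf : f xs - lam < f y.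
  near: y; move: (cf) => /cvgr_gt; apply; by rewrite ltrBlDl ltrDr.
have sub : forall i, 0 < (A *m xs + b) i 0 -> 0 < (A *m y + b) i 0.
  by move=> i; case: (Hs i).
rewrite /objP.
case: (boolP [exists i, (0 < (A *m y + b) i 0) && ~~ (0 < (A *m xs + b) i 0)]).
  case/existsP => i /andP [yi xi].
  have lt := @l0pos_lt _ _ _ _ i sub yi xi.
  have : (l0pos (A *m xs + b)).+1%:R <= (l0pos (A *m y + b))%:R :> R by rewrite ler_nat.
  rewrite -natr1 => le1.
  have : lam * ((l0pos (A *m xs + b))%:R + 1) <= lam * (l0pos (A *m y + b))%:R.
    by rewrite ler_pM2l.
  lra.
rewrite negb_exists => /forallP H.
have le_c := @l0pos_le _ _ _ _ sub.
have : lam * (l0pos (A *m xs + b))%:R <= lam * (l0pos (A *m y + b))%:R.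
  by rewrite ler_pM2l // ler_nat.
suff : f xs <= f y by lra.
have gi := @grad_ineq _ _ _ _ _ _ dfx conv dl0 Hb.
suff : 0 <= 'D_(y - xs) f xs by lra.
rewrite D_grad // dotE.
have -> : grad f xs = - (A^T *m v) by rewrite -gv opprK.
rewrite linearN /= mulNmx trmx_mul trmxK -mulmxA mxE oppr_ge0 mxE.
apply: sumr_le0 => j _; rewrite mxE.
have eAd : (A *m (y - xs)) j 0 = (A *m y + b) j 0 - (A *m xs + b) j 0.
  by rewrite mulmxBr !mxE; lra.
rewrite eAd.
have [e0|ne0] := eqVneq ((A *m xs + b) j 0) 0.
  have [vj _] := sv j; have := vj e0 => v0.
  rewrite e0 subr0; apply: mulr_ge0_le0 => //.
  have := H j; rewrite e0 ltxx /= andbT; by rewrite leNgt.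
by have [_ vj] := sv j; rewrite (vj (elimN eqP ne0)) mul0r.
Unshelve. all: by end_near.
Qed.
Lemma part1 (R : realType) (m n : nat) (f : 'cV[R]_n -> R) (lam : R)
  (A : 'M[R]_(m, n)) (b : 'cV[R]_m) :
  C2 f -> 0 < lam -> forall xs : 'cV[R]_n,
     local_minimizer (objP f lam A b) xs ->
     full_row_rank (rows_of (active_set A b xs) A) ->
     stationary f A b xs.
Proof.
move=> Cf lam0 xs [eps eps0 Hmin] rk.
have dfx : differentiable f xs by case: Cf.
have step1 : forall d : 'cV[R]_n,
    (forall i, (A *m xs + b) i 0 = 0 -> (A *m d) i 0 <= 0) ->
    0 <= \sum_i grad f xs i 0 * d i 0.
  { move=> d Hd; rewrite -D_grad //; apply: D_ge; first exact: diff_derivable.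
  have hc : {for 0, continuous (fun h : R => h *: d + xs)}.
    apply: continuousD; last exact: cst_continuous.
    by apply: continuousZr_tmp; exact: cvg_id.
  have N : \forall y \near xs, (forall i,
    ((A *m xs + b) i 0 < 0 -> (A *m y + b) i 0 < 0) /\
    (0 < (A *m xs + b) i 0 -> 0 < (A *m y + b) i 0)) /\ ball xs eps y.
    by apply: filterI; [exact: sign_near | exact: nbhsx_ballx].
  have N' : \forall h \near (0:R)^'+, (forall i,
    ((A *m xs + b) i 0 < 0 -> (A *m (h *: d + xs) + b) i 0 < 0) /\
    (0 < (A *m xs + b) i 0 -> 0 < (A *m (h *: d + xs) + b) i 0)) /\
    ball xs eps (h *: d + xs).
    apply: nbhs_right.
    have hc2 : (fun h : R => h *: d + xs) @ (0:R) --> xs.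
      by move: hc; rewrite /prop_for /continuous_at scale0r add0r.
    exact: (hc2 _ N).
  near=> h.
  have h0 : 0 < h by near: h; exact: nbhs_right_gt.
  have [Hs Hb] : (forall i,
    ((A *m xs + b) i 0 < 0 -> (A *m (h *: d + xs) + b) i 0 < 0) /\
    (0 < (A *m xs + b) i 0 -> 0 < (A *m (h *: d + xs) + b) i 0)) /\
    ball xs eps (h *: d + xs) by near: h; exact: N'.
  have E i : (A *m (h *: d + xs) + b) i 0 = h * (A *m d) i 0 + (A *m xs + b) i 0.
    by rewrite mulmxDr -scalemxAr !mxE addrA.
  have sub : forall i, 0 < (A *m (h *: d + xs) + b) i 0 -> 0 < (A *m xs + b) i 0.
    move=> i hi.
    have [lt0|gt0|eq0] := ltgtP ((A *m xs + b) i 0) 0.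
    - by have [/(_ lt0) c _] := Hs i; move: (lt_trans hi c); rewrite ltxx.
    - by [].
    - move: hi; rewrite E eq0 addr0 => hi.
      have := Hd i eq0 => c.
      have : h * (A *m d) i 0 <= 0 by rewrite pmulr_rle0.
      by rewrite leNgt hi.
  have le_c := @l0pos_le _ _ _ _ sub.
  have := Hmin _ Hb; rewrite /objP => Hm.
  have : lam * (l0pos (A *m (h *: d + xs) + b))%:R <= lam * (l0pos (A *m xs + b))%:R.
    by rewrite ler_pM2l // ler_nat.
  move=> hl.
  have : f xs <= f (h *: d + xs) by lra.
  move=> hf.
  apply: mulr_ge0; first by rewrite invr_ge0 ltW.
  by rewrite subr_ge0.
  Unshelve. all: by end_near. }
set G := active_set A b xs.
have step2 : forall d : 'cV[R]_n,
    (forall r, (rows_of G A *m d) r 0 <= 0) -> 0 <= \sum_i grad f xs i 0 * d i 0.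
  move=> d Hd; apply: step1 => i e0.
  have iG : i \in G by rewrite inE e0 eqxx.
  rewrite -(enum_rankK_in iG iG) -rows_mul; exact: Hd.
have [w [w0 gw]] := @LA _ _ _ _ _ rk step2.
have [v [v0 [vG vA]]] := @lift_w _ _ _ A _ w w0.
exists v.
  move=> i; split => [_|ne]; first exact: v0.
  by apply: vG; rewrite inE; apply/eqP.
by rewrite gw vA.
Qed.

Theorem lemma3p1 (R : realType) (m n : nat) (f : 'cV[R]_n -> R) (lam : R)
  (A : 'M[R]_(m, n)) (b : 'cV[R]_m) :
  C2 f -> 0 < lam ->
  (forall xs : 'cV[R]_n,
     local_minimizer (objP f lam A b) xs ->
     full_row_rank (rows_of (active_set A b xs) A) ->
     stationary f A b xs) /\
  (forall xs : 'cV[R]_n,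
     stationary f A b xs -> convex_near f xs ->
     local_minimizer (objP f lam A b) xs).
Proof.
move=> Cf lam0; split.
  exact: part1.
exact: part2.
Qed.
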